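(* Let $n\ge 3$. Each of the following representations $\zeta'_i:\mathrm{TVB}_n\to\mathrm{GL}_{n+1}(\mathbb{C})$, $1\le i\le 7$, given by $\zeta'_i(\sigma_k)=L_k(S)$, $\zeta'_i(\rho_k)=L_k(R)$ ($1\le k\le n-1$), $\zeta'_i(\gamma_j)=L_j(G)$ ($1\le j\le n$), is unfaithful (not injective): \begin{itemize} \item[(1)] $\zeta'_1$: $S=\begin{pmatrix}0&b\\ c&0\end{pmatrix}$, $R=\begin{pmatrix}0&-\frac{\sqrt b}{\sqrt c}\\ -\frac{\sqrt c}{\sqrt b}&0\end{pmatrix}$, $G=\mathrm{diag}(-1,1)$, $b,c\in\mathbb{C}^*$. \item[(2)] $\zeta'_2$: $S=\begin{pmatrix}0&b\\ c&0\end{pmatrix}$, $R=\begin{pmatrix}0&\frac{\sqrt b}{\sqrt c}\\ \frac{\sqrt c}{\sqrt b}&0\end{pmatrix}$, $G=\mathrm{diag}(-1,1)$, $b,c\in\mathbb{C}^*$. \item[(3)] $\zeta'_3$: $S$ and $R$ as in (1), $G=I_2$. \item[(4)] $\zeta'_4$: $S$ and $R$ as in (2), $G=I_2$. \item[(5)] $\zeta'_5$: $S=I_2$, $R=\begin{pmatrix}0&x\\ \frac1x&0\end{pmatrix}$, $G=\mathrm{diag}(-1,1)$, $x\in\mathbb{C}^*$. \item[(6)] $\zeta'_6$: $S=I_2$, $R=\begin{pmatrix}0&x\\ \frac1x&0\end{pmatrix}$, $G=I_2$, $x\in\mathbb{C}^*$. \item[(7)] $\zeta'_7$: $S=R=G=I_2$.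 \end{itemize} Here $\mathbb{C}^*=\mathbb{C}\setminus\{0\}$ and $\sqrt b,\sqrt c$ denote square roots of $b,c$.
   Context: For $n\ge 2$, the twisted virtual braid group $\mathrm{TVB}_n$ is the group with generators $\sigma_1,\dots,\sigma_{n-1}$, $\rho_1,\dots,\rho_{n-1}$, $\gamma_1,\dots,\gamma_n$ and defining relations: $\sigma_i\sigma_{i+1}\sigma_i=\sigma_{i+1}\sigma_i\sigma_{i+1}$ ($1\le i\le n-2$); $\sigma_i\sigma_j=\sigma_j\sigma_i$ ($|i-j|\ge2$); $\rho_i^2=1$; $\rho_i\rho_j=\rho_j\rho_i$ ($|i-j|\ge 2$); $\rho_i\rho_{i+1}\rho_i=\rho_{i+1}\rho_i\rho_{i+1}$; $\sigma_i\rho_j=\rho_j\sigma_i$ ($|i-j|\ge 2$); $\rho_i\rho_{i+1}\sigma_i=\sigma_{i+1}\rho_i\rho_{i+1}$; $\gamma_i^2=1$; $\gamma_i\gamma_j=\gamma_j\gamma_i$ (all $i,j$); $\gamma_j\rho_i=\rho_i\gamma_j$ and $\gamma_j\sigma_i=\sigma_i\gamma_j$ ($|i-j|\ge 2$); $\rho_i\gamma_i=\gamma_{i+1}\rho_i$; $\rho_i\sigma_i\rho_i=\gamma_{i+1}\gamma_i\sigma_i\gamma_i\gamma_{i+1}$ ($1\le i\le n-1$). For a $2\times2$ matrix $M$ and $1\le i\le n$, $L_i(M)$ denotes the $(n+1)\times(n+1)$ block-diagonal matrix $\mathrm{diag}(I_{i-1},M,I_{n-i})$. A representation is faithful if it is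 injective. *)

(* Defs.v *)
From HB Require Import structures.
From mathcomp Require Import all_boot all_order all_algebra.
From mathcomp Require Import complex.
From mathcomp Require Import Rstruct.
Set Implicit Arguments. Unset Strict Implicit. Unset Printing Implicit Defensive.
Import Order.TTheory GRing.Theory Num.Theory.
Local Open Scope ring_scope.

Definition C : Type := complex Rdefinitions.R.
HB.instance Definition _ := GRing.Field.on C.

(** Generators: [Sig k] = sigma_k, [Rho k] = rho_k, [Gam k] = gamma_k (1-based). *)
Inductive gen : Type := Sig of nat | Rho of nat | Gam of nat.

Definition gen_valid (n : nat) (g : gen) : bool :=
  match g with
  | Sig k => (1 <= k <= n.-1)%N
  | Rho k => (1 <= k <= n.-1)%N
  | Gam k => (1 <= k <= n)%N
  end.

(** A letter is a generator together with an exponent sign: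
    [(g, false)] is g, [(g, true)] is g^{-1}.  Words in the free group. *)
Definition letter := (gen * bool)%type.
Definition word := seq letter.

Definition word_valid (n : nat) (w : word) : Prop :=
  forall x, List.In x w -> gen_valid n x.1.

Definition pos (g : gen) : letter := (g, false).

Inductive tvb_relator (n : nat) : word -> word -> Prop :=
| rel_free g b : gen_valid n g -> tvb_relator n [:: (g, b); (g, ~~ b)] [::]
| rel_sss i : (1 <= i <= n - 2)%N ->
    tvb_relator n [:: pos (Sig i); pos (Sig i.+1); pos (Sig i)]
                  [:: pos (Sig i.+1); pos (Sig i); pos (Sig i.+1)]
| rel_ss i j : (1 <= i <= n.-1)%N -> (1 <= j <= n.-1)%N -> (2 <= `|i - j|)%N ->
    tvb_relator n [:: pos (Sig i); pos (Sig j)] [:: pos (Sig j); pos (Sig i)]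
| rel_rr2 i : (1 <= i <= n.-1)%N ->
    tvb_relator n [:: pos (Rho i); pos (Rho i)] [::]
| rel_rr i j : (1 <= i <= n.-1)%N -> (1 <= j <= n.-1)%N -> (2 <= `|i - j|)%N ->
    tvb_relator n [:: pos (Rho i); pos (Rho j)] [:: pos (Rho j); pos (Rho i)]
| rel_rrr i : (1 <= i <= n - 2)%N ->
    tvb_relator n [:: pos (Rho i); pos (Rho i.+1); pos (Rho i)]
                  [:: pos (Rho i.+1); pos (Rho i); pos (Rho i.+1)]
| rel_sr i j : (1 <= i <= n.-1)%N -> (1 <= j <= n.-1)%N -> (2 <= `|i - j|)%N ->
    tvb_relator n [:: pos (Sig i); pos (Rho j)] [:: pos (Rho j); pos (Sig i)]
| rel_rrs i : (1 <= i <= n - 2)%N ->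
    tvb_relator n [:: pos (Rho i); pos (Rho i.+1); pos (Sig i)]
                  [:: pos (Sig i.+1); pos (Rho i); pos (Rho i.+1)]
| rel_gg2 i : (1 <= i <= n)%N ->
    tvb_relator n [:: pos (Gam i); pos (Gam i)] [::]
| rel_gg i j : (1 <= i <= n)%N -> (1 <= j <= n)%N ->
    tvb_relator n [:: pos (Gam i); pos (Gam j)] [:: pos (Gam j); pos (Gam i)]
| rel_gr i j : (1 <= i <= n.-1)%N -> (1 <= j <= n)%N -> (2 <= `|i - j|)%N ->
    tvb_relator n [:: pos (Gam j); pos (Rho i)] [:: pos (Rho i); pos (Gam j)]
| rel_gs i j : (1 <= i <= n.-1)%N -> (1 <= j <= n)%N -> (2 <= `|i - j|)%N ->
    tvb_relator n [:: pos (Gam j); pos (Sig i)] [:: pos (Sig i); pos (Gam j)]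
| rel_rg i : (1 <= i <= n.-1)%N ->
    tvb_relator n [:: pos (Rho i); pos (Gam i)] [:: pos (Gam i.+1); pos (Rho i)]
| rel_rsr i : (1 <= i <= n.-1)%N ->
    tvb_relator n [:: pos (Rho i); pos (Sig i); pos (Rho i)]
      [:: pos (Gam i.+1); pos (Gam i); pos (Sig i); pos (Gam i); pos (Gam i.+1)].

Inductive tvb_eq (n : nat) : word -> word -> Prop :=
| tvb_step u v l r : word_valid n u -> word_valid n v -> tvb_relator n l r ->
    tvb_eq n (u ++ l ++ v) (u ++ r ++ v)
| tvb_refl w : tvb_eq n w w
| tvb_sym w1 w2 : tvb_eq n w1 w2 -> tvb_eq n w2 w1
| tvb_trans w1 w2 w3 : tvb_eq n w1 w2 -> tvb_eq n w2 w3 -> tvb_eq n w1 w3.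

Definition mx2 (a b c d : C) : 'M[C]_2 :=
  \matrix_(i < 2, j < 2)
    if val i == 0%N then (if val j == 0%N then a else b)
    else (if val j == 0%N then c else d).

(** L_k(M) = diag(I_{k-1}, M, I_{n-k}) in GL_{n+1}, for 1 <= k <= n. *)
Definition Lmx (n k : nat) (M : 'M[C]_2) : 'M[C]_(n.+1) :=
  \matrix_(i < n.+1, j < n.+1)
    if (k.-1 <= i <= k)%N && (k.-1 <= j <= k)%N
    then M (inord (i - k.-1)) (inord (j - k.-1))
    else (i == j)%:R.

Definition zeta_gen (n : nat) (S R G : 'M[C]_2) (g : gen) : 'M[C]_(n.+1) :=
  match g with
  | Sig k => Lmx n k S
  | Rho k => Lmx n k R
  | Gam k => Lmx n k G
  end.

Definition zeta_letter (n : nat) (S R G : 'M[C]_2) (x : letter) : 'M[C]_(n.+1) :=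
  if x.2 then invmx (zeta_gen n S R G x.1) else zeta_gen n S R G x.1.

Definition zeta_word (n : nat) (S R G : 'M[C]_2) (w : word) : 'M[C]_(n.+1) :=
  foldr (fun x M => zeta_letter n S R G x *m M) 1%:M w.

Definition unfaithful (n : nat) (S R G : 'M[C]_2) : Prop :=
  exists w1 w2 : word, word_valid n w1 /\ word_valid n w2 /\
    ~ tvb_eq n w1 w2 /\ zeta_word n S R G w1 = zeta_word n S R G w2.

(* Main.v *)
Require Import Defs.
From HB Require Import structures.
From mathcomp Require Import all_boot all_order all_algebra.
From mathcomp Require Import complex.
From mathcomp Require Import zify ring.
Import GRing.Theory Num.Theory.
Definition fa (t : bool * bool) := if t.1 then t else (t.1, ~~ t.2).
Definition fb (t : bool * bool) := if t.1 then (t.1, ~~ t.2) else t.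
Definition fg (t : bool * bool) := (~~ t.1, t.2).

Definition actg (g : gen) (inv : bool) (p : nat * (bool * bool)) : nat * (bool * bool) :=
  let (m, t) := p in
  match g with
  | Sig i => if m == i then (i.+1, if inv then fb t else fa t)
             else if m == i.+1 then (i, if inv then fa t else fb t) else p
  | Rho i => if m == i then (i.+1, t) else if m == i.+1 then (i, t) else p
  | Gam i => if m == i then (i, fg t) else p
  end.

Definition act (w : word) p := foldr (fun x q => actg x.1 x.2 q) p w.

Lemma act_cat u v p : act (u ++ v) p = act u (act v p).
Proof. by rewrite /act foldr_cat. Qed.

Ltac crush :=
  repeat match goal with
  | |- context [ (?a == ?b) ] => case: (@eqP _ a b) => ?; try subst; rewrite /=
  end; try lia; try reflexivity.

Lemma rel_ok n l r : tvb_relator n l r -> forall p, act l p = act r p.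
Proof.
case=> [g b _|i _|i j _ _ h|i _|i j _ _ h|i _|i j _ _ h|i _|i _|i j _ _|i j _ _ h|i j _ _ h|i _|i _];
  case=> m [x y]; rewrite /act /=; [case: g => i; case: b; rewrite /= | ..];
  crush; rewrite /fa /fb /fg /=; case: x => /=; case: y => //=.
Qed.

Lemma tvb_act n w1 w2 : tvb_eq n w1 w2 -> forall p, act w1 p = act w2 p.
Proof.
elim=> [u v l r _ _ hr|w|w1' w2' _ IH|w1' w2' w3' _ IH1 _ IH2] p.
- by rewrite !act_cat (@rel_ok _ _ _ hr).
- by [].
- by rewrite IH.
- by rewrite IH1 IH2.
Qed.

Lemma not_eq n : ~ tvb_eq n [:: pos (Sig 1); pos (Gam 1); pos (Gam 2)] [:: pos (Gam 1); pos (Gam 2); pos (Sig 1)].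
Proof. move=> /(@tvb_act _ _ _) /(_ (1%N, (false, false))). by []. Qed.
Local Open Scope ring_scope.
Lemma inord_eq2 (a b : nat) : (a < 2)%N -> (b < 2)%N ->
  ((inord a : 'I_2) == inord b) = (a == b).
Proof. by move=> ha hb; rewrite -val_eqE /= !inordK. Qed.

Lemma Lmx1 n k : Lmx n k 1%:M = 1%:M.
Proof.
apply/matrixP => i j; rewrite !mxE.
case: ifP => // /andP[/andP[h1 h2] /andP[h3 h4]].
rewrite inord_eq2; try lia.
congr (_ %:R); rewrite -[i == j]val_eqE /=; apply/eqP/eqP; lia.
Qed.

Lemma LmxG n k : (1 <= k <= n)%N ->
  Lmx n k (mx2 (-1) 0 0 1) = diag_mx (\row_(j < n.+1) if (j == k.-1 :> nat) then -1 else 1).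
Proof.
move=> hk; apply/matrixP => i j; rewrite !mxE.
case: ifP => [/andP[/andP[h1 h2] /andP[h3 h4]]|hb].
  rewrite /= !inordK; try lia.
  case: (ltnP i k) => hi; case: (ltnP j k) => hj.
  - have -> : (i - k.-1 == 0)%N = true by lia.
    have -> : (j - k.-1 == 0)%N = true by lia.
    have -> : (i == k.-1 :> nat) = true by lia.
    by have -> : (i == j) = true by apply/eqP/val_inj => /=; lia.
  - have -> : (i - k.-1 == 0)%N = true by lia.
    have -> : (j - k.-1 == 0)%N = false by lia.
    by have -> : (i == j) = false by apply/negbTE/eqP => /(congr1 val) /=; lia.
  - have -> : (i - k.-1 == 0)%N = false by lia.
    have -> : (j - k.-1 == 0)%N = true by lia.
    by have -> : (i == j) = false by apply/negbTE/eqP => /(congr1 val) /=; lia.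
  - have -> : (i - k.-1 == 0)%N = false by lia.
    have -> : (j - k.-1 == 0)%N = false by lia.
    have -> : (i == k.-1 :> nat) = false by lia.
    by have -> : (i == j) = true by apply/eqP/val_inj => /=; lia.
case: (eqVneq i j) => [e|ne]; last by rewrite mulr0n.
subst j.
have -> : (i == k.-1 :> nat) = false by move: hb; lia.
by [].
Qed.


Lemma keyG n S R : (2 <= n)%N ->
  zeta_word n S R (mx2 (-1) 0 0 1) [:: pos (Sig 1); pos (Gam 1); pos (Gam 2)] =
  zeta_word n S R (mx2 (-1) 0 0 1) [:: pos (Gam 1); pos (Gam 2); pos (Sig 1)].
Proof.
move=> hn; rewrite /zeta_word /= /zeta_letter /= !mulmx1 !LmxG; try lia.
rewrite [LHS]mulmxA !mul_mx_diag !mul_diag_mx.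
apply/matrixP => i j; rewrite !mxE.
case: (eqVneq i j) => [->|ne]; first by ring.
case: i j ne => [[|[|i]] hi] [[|[|j]] hj] //= ne; ring.
Qed.

Lemma unf n S R G : (3 <= n)%N ->
  zeta_word n S R G [:: pos (Sig 1); pos (Gam 1); pos (Gam 2)] =
  zeta_word n S R G [:: pos (Gam 1); pos (Gam 2); pos (Sig 1)] ->
  unfaithful n S R G.
Proof.
move=> hn he; exists [:: pos (Sig 1); pos (Gam 1); pos (Gam 2)], [:: pos (Gam 1); pos (Gam 2); pos (Sig 1)].
split; [|split; [|split; [exact: not_eq | exact: he]]];
  move=> x /= [<-|[<-|[<-|[]]]] /=; lia.
Qed.

Ltac triv := rewrite /zeta_word /= /zeta_letter /= !Lmx1 ?mulmx1 ?mul1mx.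

Theorem theorem3p5 (n : nat) (hn : (3 <= n)%N) :
  (* (1) *)
  (forall b c sb sc : C, b != 0 -> c != 0 -> sb ^+ 2 = b -> sc ^+ 2 = c ->
     unfaithful n (mx2 0 b c 0) (mx2 0 (- (sb / sc)) (- (sc / sb)) 0) (mx2 (-1) 0 0 1)) /\
  (* (2) *)
  (forall b c sb sc : C, b != 0 -> c != 0 -> sb ^+ 2 = b -> sc ^+ 2 = c ->
     unfaithful n (mx2 0 b c 0) (mx2 0 (sb / sc) (sc / sb) 0) (mx2 (-1) 0 0 1)) /\
  (* (3) *)
  (forall b c sb sc : C, b != 0 -> c != 0 -> sb ^+ 2 = b -> sc ^+ 2 = c ->
     unfaithful n (mx2 0 b c 0) (mx2 0 (- (sb / sc)) (- (sc / sb)) 0) 1%:M) /\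
  (* (4) *)
  (forall b c sb sc : C, b != 0 -> c != 0 -> sb ^+ 2 = b -> sc ^+ 2 = c ->
     unfaithful n (mx2 0 b c 0) (mx2 0 (sb / sc) (sc / sb) 0) 1%:M) /\
  (* (5) *)
  (forall x : C, x != 0 ->
     unfaithful n 1%:M (mx2 0 x x^-1 0) (mx2 (-1) 0 0 1)) /\
  (* (6) *)
  (forall x : C, x != 0 ->
     unfaithful n 1%:M (mx2 0 x x^-1 0) 1%:M) /\
  (* (7) *)
  unfaithful n 1%:M 1%:M 1%:M.
Proof.
have h2 : (2 <= n)%N by lia.
split; [move=> *; apply: unf => //; exact: keyG|].
split; [move=> *; apply: unf => //; exact: keyG|].
split; [move=> *; apply: unf => //; by triv|].
split; [move=> *; apply: unf => //; by triv|].
split; [move=> *; apply: unf => //; by triv|].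
split; [move=> *; apply: unf => //; by triv|].
apply: unf => //; by triv.
Qed.
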